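(* If $X\subseteq\mathbb{R}^n_\infty$ is compact, then $\mathcal{F}(X)$ is compact.
   Context: $\mathbb{R}^n_\infty$ is $\mathbb{R}^n$ with the $\ell^\infty$-metric. For $1\le i\le n$, $\Lambda_i=\{x:x_i=\|x\|_\infty\}$ and $p+\xi\Lambda_i=\{p+\xi z:z\in\Lambda_i\}$ for $\xi\in\{\pm1\}$. $\mathcal{F}(X)$ is the set of points $p\in\mathbb{R}^n$ such that $(p+\xi\Lambda_i)\cap X\ne\emptyset$ for every $i\in\{1,\dots,n\}$ and $\xi\in\{\pm1\}$. *)

(* Defs.v *)
(* R^n_infty is modelled as the row vectors 'rV[R]_n,
   whose canonical normed structure in MathComp-Analysis is the max (l^infty)
   norm `|x| = max_j |x 0 j| (mx_norm), with the induced topology. *)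
From HB Require Import structures.
From mathcomp Require Import all_boot all_order all_algebra.
From mathcomp Require Import all_classical all_reals all_analysis.
Set Implicit Arguments. Unset Strict Implicit. Unset Printing Implicit Defensive.
Import Order.TTheory GRing.Theory Num.Theory.
Import numFieldNormedType.Exports.
Local Open Scope classical_set_scope.
Local Open Scope ring_scope.

Definition Lambda (R : realType) (n : nat) (i : 'I_n) : set 'rV[R]_n :=
  [set x : 'rV[R]_n | x 0 i = `|x|].

Definition cone (R : realType) (n : nat) (p : 'rV[R]_n) (xi : R) (i : 'I_n)
  : set 'rV[R]_n :=
  [set p + xi *: z | z in Lambda i].

Definition Fset (R : realType) (n : nat) (X : set 'rV[R]_n) : set 'rV[R]_n :=
  [set p | forall (i : 'I_n) (xi : R), (xi = 1 \/ xi = -1) ->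
      cone p xi i `&` X !=set0].

Lemma norm_is_mx_norm (R : realType) (n : nat) (x : 'rV[R]_n) :
  `|x| = mx_norm x.
Proof. by []. Qed.

(* Main.v *)
Require Import Defs.
From HB Require Import structures.
From mathcomp Require Import all_boot all_order all_algebra.
From mathcomp Require Import all_classical all_reals all_analysis.
From mathcomp Require Import ring lra.
Import Order.TTheory GRing.Theory Num.Theory.
Import numFieldNormedType.Exports.
Local Open Scope classical_set_scope.
Local Open Scope ring_scope.

Lemma coord_le {R : realType} {n} (v : 'rV[R]_n) j : `|v 0 j| <= `|v|.
Proof.
rewrite [leRHS]norm_is_mx_norm mx_normrE; apply/bigmax_geP; right => /=.
by exists (0, j).
Qed.

Lemma norm_le (R : realType) n (v : 'rV[R]_n) c :
  0 <= c -> (forall j, `|v 0 j| <= c) -> `|v| <= c.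
Proof.
move=> c0 H; rewrite [leLHS]norm_is_mx_norm mx_normrE; apply/bigmax_leP.
split => // -[a j] _ /=; rewrite (ord1 a); exact: H.
Qed.

Definition G {R : realType} {n : nat} (xi : R) (i : 'I_n) (v : 'rV[R]_n) : R :=
  xi * v 0 i - `|v|.

Lemma G_le0 (R : realType) n (xi : R) i (v : 'rV[R]_n) :
  (xi = 1 \/ xi = -1) -> G xi i v <= 0.
Proof.
move=> hxi; rewrite /G subr_le0; apply: le_trans (ler_norm _) _.
rewrite normrM; case: hxi => ->; rewrite ?normrN normr1 mul1r; exact: coord_le.
Qed.

Lemma G_lip {R : realType} {n} {xi : R} i (v w : 'rV[R]_n) :
  (xi = 1 \/ xi = -1) -> `|G xi i v - G xi i w| <= 2 * `|v - w|.
Proof.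
move=> hxi; rewrite /G.
have -> : xi * v 0 i - `|v| - (xi * w 0 i - `|w|) =
   xi * (v - w) 0 i + (`|w| - `|v|).
  by rewrite !mxE; ring.
apply: le_trans (ler_normD _ _) _.
rewrite mulr2n mulrDl mul1r lerD //.
  rewrite normrM; case: hxi => ->; rewrite ?normrN normr1 mul1r; exact: coord_le.
by rewrite (distrC v w); exact: ler_dist_dist.
Qed.

Lemma cone_G {R : realType} {n} {xi : R} {i} {p x : 'rV[R]_n} :
  (xi = 1 \/ xi = -1) -> cone p xi i x <-> G xi i (x - p) = 0.
Proof.
move=> hxi; have xi2 : xi * xi = 1 by case: hxi => ->; rewrite ?mulrNN mulr1.
have nxi : `|xi| = 1 by case: hxi => ->; rewrite ?normrN normr1.
split.
  case=> z; rewrite /Lambda /= => zi <-.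
  rewrite /G addrAC subrr add0r normrZ nxi mul1r mxE mulrA xi2 mul1r zi subrr //.
move=> /eqP; rewrite /G subr_eq0 => /eqP h.
exists (xi *: (x - p)); rewrite /Lambda /=.
  by rewrite mxE h normrZ nxi mul1r.
by rewrite scalerA xi2 scale1r addrC subrK.
Qed.

Lemma subsub {R : realType} {n} (a b c : 'rV[R]_n) : a - c - (b - c) = a - b.
Proof. by rewrite opprB subrKA. Qed.

Lemma subsub2 {R : realType} {n} (a b c : 'rV[R]_n) : a - b - (a - c) = c - b.
Proof. by rewrite opprB addrC subrKA. Qed.

Lemma lip_cont (R : realType) n (f : 'rV[R]_n -> R) :
  (forall v w, `|f v - f w| <= 2 * `|v - w|) -> continuous f.
Proof.
move=> hf y; apply/(@cvgrPdist_lt R R^o _ _ (nbhs_filter y)) => e e0.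
apply/(@nbhs_normP R [the pseudoMetricNormedZmodType R of 'rV[R]_n] y (fun t => `|f y - f t| < e)).
exists (e / 2); first by rewrite /= divr_gt0.
move=> z /= hz; apply: le_lt_trans (hf y z) _.
lra.
Qed.

Theorem proposition5p7 (R : realType) (n : nat) (X : set 'rV[R]_n) :
  compact X -> compact (Fset X).
Proof.
move=> cX.
have cone_iff : forall p i (xi : R), (xi = 1 \/ xi = -1) ->
    (cone p xi i `&` X !=set0 <-> exists2 x, X x & G xi i (x - p) = 0).
  move=> p i xi hxi; split => [[x [cx Xx]]|[x Xx gx]]; exists x => //.
    exact: (cone_G hxi).1 cx.
  by split => //; exact: (cone_G hxi).2 gx.
apply: bounded_closed_compact.
- have [M [Mr HM]] := compact_bounded cX.
  exists (Num.max M 0); split; first by rewrite num_real.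
  move=> c; rewrite gt_max => /andP[Mc c0] p Fp.
  apply: norm_le; first exact: ltW.
  move=> j; rewrite ler_norml.
  have [x1 X1 g1] := (cone_iff p j 1 (or_introl erefl)).1 (Fp j 1 (or_introl erefl)).
  have [x2 X2 g2] := (cone_iff p j (-1) (or_intror erefl)).1 (Fp j (-1) (or_intror erefl)).
  have n1 : `|x1| <= c := HM c Mc x1 X1.
  have n2 : `|x2| <= c := HM c Mc x2 X2.
  have c1 := coord_le x1 j; have c2 := coord_le x2 j.
  have h1 := normr_ge0 (x1 - p); have h2 := normr_ge0 (x2 - p).
  have a1 := ler_norm (x1 0 j); have a2 := ler_norm (- x2 0 j).
  rewrite normrN in a2.
  move: g1 g2; rewrite /G !mxE => g1 g2.
  apply/andP; split; lra.
- move=> p clp i xi hxi.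
  have [q [Fq _]] := clp _ (nbhsx_ballx p 1 ltr01).
  have [x0 X0 _] := (cone_iff q i xi hxi).1 (Fq i xi hxi).
  apply/(cone_iff p i xi hxi).
  have [//|nE] := pselect (exists2 x, X x & G xi i (x - p) = 0).
  have gneg : forall x, X x -> G xi i (x - p) < 0.
    move=> x Xx; rewrite lt_neqAle G_le0 // andbT; apply/eqP => h.
    by apply: nE; exists x.
  have fc : continuous (fun x : 'rV[R]_n => G xi i (x - p)).
    apply: lip_cont => v w.
    have := G_lip i (v - p) (w - p) hxi.
    by rewrite subsub.
  have [c cXc cmax] := compact_EVT_max (ex_intro _ x0 X0) cX
     (@continuous_subspaceT _ _ X _ fc).
  have gc := gneg c (set_mem cXc).
  have e0 : 0 < - G xi i (c - p) / 2 by rewrite divr_gt0 // oppr_gt0.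
  have [q' [Fq' bq']] := clp _ (nbhsx_ballx p _ e0).
  have [x Xx gx] := (cone_iff q' i xi hxi).1 (Fq' i xi hxi).
  move: bq'; rewrite -ball_normE /= => bq'.
  have L := G_lip i (x - p) (x - q') hxi.
  have E : x - p - (x - q') = q' - p by rewrite subsub2.
  rewrite E gx subr0 in L; rewrite distrC in bq'.
  have cm := cmax x (mem_set Xx).
  have := ler_norm (- G xi i (x - p)); rewrite normrN => a.
  exfalso; lra.
Qed.
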